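(* For every integer $n\ge 2$, every integer $k\ge 0$ and every real $x$, $$W^{(k+2)}_{n}(x)=W^{(k)}_{n}(x)+(-2)^{n-1}(n+k+1)(n-2)!\,\sin^n(x)\,W^{(k+2)}_{n-1}(x).$$
   Context: For smooth functions $f_1,\dots,f_n$ of a real variable $x$, $\mathrm{Wr}\{f_1,\dots,f_n\}$ denotes the determinant of the $n\times n$ matrix with $(i,j)$ entry $f_j^{(i-1)}(x)$. For integers $k\ge0$ define $W^{(k)}_1(x):=\sin((k+1)x)$ and, for $n\ge 2$, $W^{(k)}_n(x):=\mathrm{Wr}\{\sin(x),\sin(2x),\dots,\sin((n-1)x),\sin((n+k)x)\}$. *)

(* Defs.v *)
From HB Require Import structures.
From mathcomp Require Import all_boot all_order all_algebra.
From mathcomp Require Import all_classical all_reals all_analysis.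
Set Implicit Arguments. Unset Strict Implicit. Unset Printing Implicit Defensive.
Import Order.TTheory GRing.Theory Num.Theory.
Local Open Scope ring_scope.

Definition Wr (R : realType) (n : nat) (f : 'I_n -> R -> R) (x : R) : R :=
  \det (\matrix_(i < n, j < n) derive1n i (f j) x).

(* W^{(k)}_n(x):  n = 1 : sin((k+1)x);
   n >= 2 : Wr{sin x, sin 2x, ..., sin((n-1)x), sin((n+k)x)}.
   (n = 0 is never used; it is given the value of the generic branch.) *)
Definition W (R : realType) (k n : nat) (x : R) : R :=
  if n == 1%N then sin ((k.+1)%:R * x)
  else Wr (fun (j : 'I_n) (t : R) =>
             if (j < n.-1)%N then sin ((j.+1)%:R * t) else sin ((n + k)%:R * t)) x.

(* Main.v *)
Require Import Defs.
From HB Require Import structures.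
From mathcomp Require Import all_boot all_order all_algebra.
From mathcomp Require Import all_classical all_reals all_analysis.
From mathcomp Require Import ring zify.
Import Order.TTheory GRing.Theory Num.Theory.
Local Open Scope ring_scope.
Ltac rng := cbn [SemiGroup.Law.sort Algebra.Algebra_add__canonical__SemiGroup_Law GRing.GRing_mul__canonical__SemiGroup_Law]; ring.

Module MB.
Set Implicit Arguments. Unset Strict Implicit. Unset Printing Implicit Defensive.
Section S.
Variable R : realType.
Implicit Types f g : R -> R.

Lemma d1D f g t : derivable f t 1 -> derivable g t 1 ->
  @derive1 R R (fun x => f x + g x) t = (derive1 f t : R) + (derive1 g t : R) :> R.
Proof. move=> df dg; rewrite !derive1E. exact: (deriveD df dg). Qed.
Lemma dvD f g t : derivable f t 1 -> derivable g t 1 -> derivable (fun x => f x + g x) t 1.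
Proof. move=> df dg; exact: (derivableD df dg). Qed.
Lemma d1M f g t : derivable f t 1 -> derivable g t 1 ->
  @derive1 R R (fun x => f x * g x) t = (derive1 f t : R) * g t + f t * (derive1 g t : R) :> R.
Proof. move=> df dg; rewrite !derive1E (deriveM df dg) /= addrC; congr (_ + _); exact: mulrC. Qed.
Lemma dvM f g t : derivable f t 1 -> derivable g t 1 -> derivable (fun x => f x * g x) t 1.
Proof. move=> df dg; exact: (derivableM df dg). Qed.

Lemma dv_hc (P : {poly R}) t : derivable (fun x => P.[cos x]) t 1.
Proof.
apply/derivable1_diffP.
apply: (@differentiable_comp _ _ _ _ cos (horner P)).
  exact/derivable1_diffP/derivable_cos.
exact/derivable1_diffP/derivable_horner.
Qed.

Lemma d1_hc (P : {poly R}) t : derive1 (fun x => P.[cos x]) t = - sin t * (P^`()).[cos t].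
Proof.
have := derive1_comp (@derivable_cos R t) (@derivable_horner R P (cos t)).
rewrite /comp => ->. rewrite -derivE.
rewrite derive1E (@derive_val _ _ _ _ _ _ _ (is_derive_cos t)).
by rewrite mulrC.
Qed.

Definition ev (P Q : {poly R}) := fun t => P.[cos t] + sin t * Q.[cos t].
Definition Dp (P Q : {poly R}) := 'X * Q - (1 - 'X^2) * Q^`().
Definition Dq (P Q : {poly R}) := - P^`().

Lemma dv_ev P Q t : derivable (ev P Q) t 1.
Proof. apply: dvD; first exact: dv_hc. apply: dvM; [exact: derivable_sin|exact: dv_hc]. Qed.

Lemma d1_ev P Q t : derive1 (ev P Q) t = ev (Dp P Q) (Dq P Q) t.
Proof.
rewrite /ev d1D; [|exact: dv_hc|apply: dvM; [exact: derivable_sin|exact: dv_hc]].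
rewrite d1M; [|exact: derivable_sin|exact: dv_hc].
rewrite !d1_hc derive1E (@derive_val _ _ _ _ _ _ _ (is_derive_sin t)).
rewrite /Dp /Dq !hornerE -sin2cos2. rng.
Qed.

Definition sm f := exists P Q, f = ev P Q.

Lemma sm_dv f t : sm f -> derivable f t 1.
Proof. by case=> P [Q ->]; exact: dv_ev. Qed.
Lemma sm_d1 f : sm f -> sm (derive1 f).
Proof. case=> P [Q ->]; exists (Dp P Q), (Dq P Q); apply/funext => t; exact: d1_ev. Qed.
Lemma sm_add f g : sm f -> sm g -> sm (fun x => f x + g x).
Proof.
case=> P1 [Q1 ->] [P2 [Q2 ->]]; exists (P1 + P2), (Q1 + Q2); apply/funext => t.
rewrite /ev !hornerE; rng.
Qed.
Lemma sm_mul f g : sm f -> sm g -> sm (fun x => f x * g x).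
Proof.
case=> P1 [Q1 ->] [P2 [Q2 ->]].
exists (P1 * P2 + (1 - 'X^2) * Q1 * Q2), (P1 * Q2 + Q1 * P2); apply/funext => t.
rewrite /ev !hornerE -sin2cos2; rng.
Qed.
Lemma sm_cst c : sm (fun _ => c).
Proof. exists c%:P, 0; apply/funext => t; rewrite /ev !hornerE; rng. Qed.
Lemma sm_cos : sm (@cos R).
Proof. exists 'X, 0; apply/funext => t; rewrite /ev !hornerE; rng. Qed.
Lemma sm_sin : sm (@sin R).
Proof. exists 0, 1; apply/funext => t; rewrite /ev !hornerE; rng. Qed.
Lemma sm_hc P : sm (fun x => P.[cos x]).
Proof. exists P, 0; apply/funext => t; rewrite /ev !hornerE; rng. Qed.
End S.

End MB.
Import MB.

Module MC.
Set Implicit Arguments. Unset Strict Implicit. Unset Printing Implicit Defensive.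
Section S.
Variable R : realType.
Implicit Types f g : R -> R.

Lemma dnS i f : derive1n i.+1 f = derive1 (derive1n i f).
Proof. by rewrite derive1nS. Qed.
Lemma dnSr i f : derive1n i.+1 f = derive1n i (derive1 f).
Proof. by rewrite /derive1n iterSr. Qed.

Lemma sm_dn i f : sm f -> sm (derive1n i f).
Proof. by move=> sf; elim: i => [|i IH] //; rewrite dnS; exact: sm_d1. Qed.

Lemma sm_scal c f : sm f -> sm (fun x => c * f x).
Proof. move=> sf; exact: (sm_mul (sm_cst c) sf). Qed.

Lemma sm_sum m (G : 'I_m -> R -> R) : (forall l, sm (G l)) -> sm (fun x => \sum_(l < m) G l x).
Proof.
elim: m G => [|m IH] G sG.
  rewrite (_ : (fun x => \sum_(l < 0) G l x) = fun _ => 0); first exact: sm_cst.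
  by apply/funext=> x; rewrite big_ord0.
have -> : (fun x => \sum_(l < m.+1) G l x) = fun x => \sum_(l < m) G (widen_ord (leqnSn m) l) x + G ord_max x.
  by apply/funext => x; rewrite big_ord_recr.
apply: sm_add; [exact: IH|exact: sG].
Qed.

Lemma d1_sum m (G : 'I_m -> R -> R) : (forall l, sm (G l)) ->
  derive1 (fun x => \sum_(l < m) G l x) = fun x => \sum_(l < m) derive1 (G l) x.
Proof.
elim: m G => [|m IH] G sG; apply/funext => t.
  rewrite big_ord0 (_ : (fun x => \sum_(l < 0) G l x) = fun _ => 0); first exact: derive1_cst.
  by apply/funext=> x; rewrite big_ord0.
have -> : (fun x => \sum_(l < m.+1) G l x) = fun x => \sum_(l < m) G (widen_ord (leqnSn m) l) x + G ord_max x.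
  by apply/funext => x; rewrite big_ord_recr.
rewrite d1D; [|apply: sm_dv; apply: sm_sum => l; exact: sG|exact: sm_dv].
by rewrite IH // big_ord_recr.
Qed.

Lemma d1_scal c f : sm f -> derive1 (fun x => c * f x) = fun x => c * derive1 f x.
Proof.
move=> sf; apply/funext => t; rewrite d1M; [|exact: sm_dv (sm_cst c)|exact: sm_dv].
by rewrite derive1_cst mul0r add0r.
Qed.

Lemma dn_lin i m (c : 'I_m -> R) (G : 'I_m -> R -> R) : (forall l, sm (G l)) ->
  derive1n i (fun x => \sum_(l < m) c l * G l x) = fun x => \sum_(l < m) c l * derive1n i (G l) x.
Proof.
move=> sG; elim: i => [|i IH] //.
rewrite dnS IH d1_sum; last by move=> l; apply: sm_scal; apply: sm_dn.
apply/funext => t; apply: eq_bigr => l _.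
by rewrite d1_scal ?dnS //; apply: sm_dn.
Qed.

Lemma dn_cst i (c : R) : derive1n i.+1 (fun _ : R => c) = fun _ => 0.
Proof.
elim: i => [|i IH]; first by apply/funext => t; rewrite derive1n1 derive1_cst.
by rewrite dnS IH; apply/funext => t; rewrite derive1_cst.
Qed.

Lemma leibniz g f i K : sm g -> sm f -> (i < K)%N ->
  derive1n i (fun x => g x * f x) =
  fun t => \sum_(l < K) 'C(i, l)%:R * (derive1n (i - l) g t * derive1n l f t).
Proof.
move=> sg sf; elim: i K => [|i IH] K iK.
  apply/funext => t; case: K iK => // K _.
  rewrite big_ord_recl bin0 mul1r subn0 big1 ?addr0 // => l _.
  by rewrite lift0 bin0n mul0r.
case: K iK => // K iK.
rewrite dnS (IH K.+1) ?(ltnW iK) // d1_sum; last first.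
  move=> l; apply: sm_scal; apply: sm_mul; exact: sm_dn.
apply/funext => t.
have E : forall l : 'I_K.+1, derive1 (fun t0 => 'C(i, l)%:R * (derive1n (i - l) g t0 * derive1n l f t0)) t
   = 'C(i, l)%:R * (derive1n (i - l).+1 g t * derive1n l f t) + 'C(i, l)%:R * (derive1n (i - l) g t * derive1n l.+1 f t).
  move=> l; rewrite d1_scal; last by apply: sm_mul; exact: sm_dn.
  rewrite d1M; [|exact/sm_dv/sm_dn|exact/sm_dv/sm_dn].
  by rewrite -!dnS mulrDr.
pose a l := 'C(i, l)%:R * (derive1n (i - l).+1 g t * derive1n l f t).
pose b l := 'C(i, l)%:R * (derive1n (i - l) g t * derive1n l.+1 f t).
pose c l := 'C(i.+1, l)%:R * (derive1n (i.+1 - l) g t * derive1n l f t).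
suff H : \sum_(0 <= l < K.+1) a l + \sum_(0 <= l < K.+1) b l = \sum_(0 <= l < K.+1) c l.
  rewrite !big_mkord in H; rewrite (eq_bigr _ (fun l _ => E l)) big_split; exact: H.
rewrite big_nat_recl // [X in _ + X = _]big_nat_recr // big_nat_recl //.
rewrite (_ : b K = 0); last by rewrite /b bin_small ?mul0r.
cbn [Monoid.Law.sort Algebra.Algebra_add__canonical__Monoid_Law].
rewrite addr0 {1}/a {1}/c !bin0 subn0 -addrA; congr (_ + _).
rewrite -big_split; apply: eq_big_nat => l _.
rewrite /a /b /c binS natrD mulrDl; congr (_ + _).
case: (leqP l.+1 i) => li.
  by rewrite (subSn li).
by rewrite bin_small ?mul0r.
Qed.
End S.

End MC.
Import MC.

Module MD.
Set Implicit Arguments. Unset Strict Implicit. Unset Printing Implicit Defensive.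
Section S.
Variable R : realType.
Implicit Types f g : R -> R.

Lemma dn_addsc i f g (c : R) : sm f -> sm g ->
  derive1n i (fun x => f x + c * g x) = fun x => derive1n i f x + c * derive1n i g x.
Proof.
move=> sf sg; elim: i => [|i IH] //.
rewrite dnS IH; apply/funext => t.
rewrite d1D; [|exact/sm_dv/sm_dn|exact/sm_dv/sm_scal/sm_dn].
by rewrite d1_scal ?dnS //; apply: sm_dn.
Qed.

Lemma Wr_mul n g (F : 'I_n -> R -> R) x : sm g -> (forall j, sm (F j)) ->
  Wr (fun j t => g t * F j t) x = g x ^+ n * Wr F x.
Proof.
move=> sg sF; rewrite /Wr.
set M := \matrix_(i < n, j < n) derive1n i (F j) x.
set L := \matrix_(i < n, l < n) ('C(i, l)%:R * derive1n (i - l) g x).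
have -> : \matrix_(i < n, j < n) derive1n i (fun t => g t * F j t) x = L *m M.
  apply/matrixP => i j; rewrite !mxE (leibniz _ _ (ltn_ord i)) //.
  by apply: eq_bigr => l _; rewrite !mxE mulrA.
rewrite det_mulmx det_trig.
  congr (_ * _); rewrite -[n in RHS]card_ord -prodr_const; apply: eq_bigr => i _.
  by rewrite mxE binn subnn mul1r.
apply/forallP => i; apply/forallP => j; apply/implyP => ij.
by rewrite mxE bin_small // mul0r.
Qed.

Lemma Wr_tri n (F G : 'I_n -> R -> R) (T : 'M[R]_n) x : (forall l, sm (G l)) ->
  (forall j, F j = fun t => \sum_(l < n) T l j * G l t) ->
  (forall (l j : 'I_n), (j < l)%N -> T l j = 0) ->
  Wr F x = (\prod_(j < n) T j j) * Wr G x.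
Proof.
move=> sG hF hT; rewrite /Wr.
have -> : \matrix_(i < n, j < n) derive1n i (F j) x = (\matrix_(i < n, j < n) derive1n i (G j) x) *m T.
  apply/matrixP => i j; rewrite !mxE hF dn_lin //.
  by apply: eq_bigr => l _; rewrite !mxE mulrC.
rewrite det_mulmx mulrC -(det_tr T) det_trig.
  by congr (_ * _); apply: eq_bigr => i _; rewrite mxE.
apply/forallP => i; apply/forallP => j; apply/implyP => ij.
by rewrite mxE hT.
Qed.

Lemma Wr_first n (H : 'I_n.+1 -> R -> R) x : H ord0 = (fun _ => 1) ->
  Wr H x = Wr (fun j : 'I_n => derive1 (H (lift ord0 j))) x.
Proof.
move=> H0; rewrite /Wr (expand_det_col _ ord0) big_ord_recl big1 ?addr0.
  rewrite mxE derive1n0 H0 mul1r /cofactor addn0 expr0 mul1r.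
  congr (\det _); apply/matrixP => i j; rewrite !mxE lift0.
  by rewrite dnSr.
move=> l _; rewrite mxE lift0 H0 dn_cst mul0r //.
Qed.

Lemma det_colB n (A B C : 'M[R]_n) j0 :
  (forall i j, j != j0 -> A i j = C i j) -> (forall i j, j != j0 -> B i j = C i j) ->
  (forall i, C i j0 = A i j0 - B i j0) -> \det C = \det A - \det B.
Proof.
move=> hA hB hC; rewrite !(expand_det_col _ j0) -sumrB; apply: eq_bigr => i _.
have cof : forall D : 'M[R]_n, (forall i j, j != j0 -> D i j = C i j) -> cofactor D i j0 = cofactor C i j0.
  move=> D hD; rewrite /cofactor; congr (_ * \det _); apply/matrixP => a b; rewrite !mxE.
  by apply: hD; rewrite eq_sym neq_lift.
by rewrite hC (cof A hA) (cof B hB) mulrBl.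
Qed.

Lemma Wr_colB n (F F1 F2 : 'I_n -> R -> R) j0 x :
  (forall j, j != j0 -> F1 j = F j) -> (forall j, j != j0 -> F2 j = F j) ->
  sm (F1 j0) -> sm (F2 j0) -> F j0 = (fun t => F1 j0 t + (-1) * F2 j0 t) ->
  Wr F x = Wr F1 x - Wr F2 x.
Proof.
move=> h1 h2 s1 s2 h0; rewrite /Wr; apply: (det_colB (j0 := j0)).
- by move=> i j jj; rewrite !mxE h1.
- by move=> i j jj; rewrite !mxE h2.
by move=> i; rewrite !mxE h0 dn_addsc // mulN1r.
Qed.
End S.

End MD.
Import MD.

Module ME.
Set Implicit Arguments. Unset Strict Implicit. Unset Printing Implicit Defensive.
Section S.
Variable R : realType.
Implicit Types f g : R -> R.

Fixpoint U (j : nat) : {poly R} :=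
  if j is j1.+1 then (if j1 is j2.+1 then 'X *+ 2 * U j1 - U j2 else 'X *+ 2) else 1.

Lemma U0 : U 0 = 1. Proof. by []. Qed.
Lemma U1 : U 1 = 'X *+ 2. Proof. by []. Qed.
Lemma USS j : U j.+2 = 'X *+ 2 * U j.+1 - U j. Proof. by []. Qed.

Lemma mulSt m (t : R) : m.+1%:R * t = m%:R * t + t.
Proof. by rewrite mulrSr mulrDl mul1r. Qed.
Lemma mulSt' m (t : R) : m%:R * t = m.+1%:R * t - t.
Proof. by rewrite mulSt addrK. Qed.

Lemma sin_rec (a t : R) : sin (a + t) = 2 * cos t * sin a - sin (a - t).
Proof. rewrite sinD sinB; rng. Qed.

Lemma sinU j t : sin (j.+1%:R * t) = sin t * (U j).[cos t].
Proof.
suff : sin (j.+1%:R * t) = sin t * (U j).[cos t] /\ sin (j.+2%:R * t) = sin t * (U j.+1).[cos t] by case.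
elim: j => [|j [IH1 IH2]].
  split; first by rewrite mul1r U0 hornerC mulr1.
  rewrite U1 hornerMn hornerX (_ : 2%:R * t = t + t); last by rewrite mulrDl mul1r.
  by rewrite sinD; rng.
split => //.
rewrite USS !hornerE (mulSt j.+2) sin_rec -mulSt'.
rewrite IH2 IH1; rng.
Qed.

Lemma sin_diff m (t : R) : sin (m.+2%:R * t) - sin (m%:R * t) = sin t * (2 * cos (m.+1%:R * t)).
Proof.
rewrite (mulSt m.+1) (mulSt' m).
rewrite sinD sinB; rng.
Qed.

Lemma sm_sinn m : sm (fun t : R => sin (m%:R * t)).
Proof.
case: m => [|j].
  rewrite (_ : (fun t : R => sin (0%:R * t)) = fun _ => 0); first exact: sm_cst.
  by apply/funext => t; rewrite mul0r sin0.
rewrite (_ : (fun t : R => sin (j.+1%:R * t)) = fun t => sin t * (U j).[cos t]).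
  apply: sm_mul; [exact: sm_sin|exact: sm_hc].
by apply/funext => t; rewrite sinU.
Qed.
End S.
Arguments U : simpl never.

End ME.
Import ME.

Module MF.
Set Implicit Arguments. Unset Strict Implicit. Unset Printing Implicit Defensive.
Section S.
Variable R : realType.
Implicit Types f g : R -> R.

Lemma dv_lin (c t : R) : derivable (fun x : R => c * x) t 1.
Proof. exact: (derivableM (@derivable_cst R R R c t 1) (@derivable_id R R t 1)). Qed.

Lemma d1_lin (c t : R) : derive1 (fun x : R => c * x) t = c.
Proof. by rewrite (derive1Ml c (@derivable_id R R t 1)) derive1_id mulr1. Qed.

Lemma d1cos (c t : R) : derive1 (fun x => 2 * cos (c * x)) t = - (2 * c) * sin (c * t).
Proof.
have dv : derivable (fun x => cos (c * x)) t 1.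
  apply/derivable1_diffP; apply: (@differentiable_comp _ _ _ _ (fun x : R => c * x) cos).
    exact/derivable1_diffP/dv_lin.
  exact/derivable1_diffP/derivable_cos.
rewrite (derive1Ml 2 dv).
have := derive1_comp (@dv_lin c t) (@derivable_cos R (c * t)).
rewrite /comp => ->; rewrite d1_lin derive1E (@derive_val _ _ _ _ _ _ _ (is_derive_cos (c * t))).
rng.
Qed.

Definition Um1 j := if j is j'.+1 then U R j' else 0.
Lemma Urec j : U R j.+1 = 'X *+ 2 * U R j - Um1 j.
Proof. by case: j => [|j] //=; rewrite mulr1 subr0. Qed.

Lemma cos_rec (a t : R) : cos (a + t) = 2 * cos t * cos a - cos (a - t).
Proof. rewrite cosD cosB; rng. Qed.

Lemma cosU j (t : R) : 2 * cos (j.+1%:R * t) = (U R j.+1 - Um1 j).[cos t].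
Proof.
suff : 2 * cos (j.+1%:R * t) = (U R j.+1 - Um1 j).[cos t] /\
       2 * cos (j.+2%:R * t) = (U R j.+2 - Um1 j.+1).[cos t] by case.
elim: j => [|j [IH1 IH2]].
  split; first by rewrite mul1r /= !hornerE; rng.
  rewrite /= !hornerE; have -> : (2 : R) * t = t + t by rng.
  rewrite cosD -!expr2 sin2cos2; rng.
split => //.
rewrite (mulSt j.+2) cos_rec -mulSt'.
have -> : 2 * (2 * cos t * cos (j.+2%:R * t) - cos (j.+1%:R * t)) =
   2 * cos t * (2 * cos (j.+2%:R * t)) - 2 * cos (j.+1%:R * t) by rng.
rewrite IH1 IH2 (_ : Um1 j.+1 = U R j) // (_ : Um1 j.+2 = U R j.+1) // (USS R j.+1) (Urec j) !hornerE; rng.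
Qed.
End S.

End MF.
Import MF.

Module MG.
Set Implicit Arguments. Unset Strict Implicit. Unset Printing Implicit Defensive.
Section S.
Variable R : realType.
Implicit Types f g : R -> R.

Lemma Ucoef j : (U R j)`_j = 2 ^+ j /\ forall l, (j < l)%N -> (U R j)`_l = 0.
Proof.
suff : ((U R j)`_j = 2 ^+ j /\ forall l, (j < l)%N -> (U R j)`_l = 0) /\
       ((U R j.+1)`_j.+1 = 2 ^+ j.+1 /\ forall l, (j.+1 < l)%N -> (U R j.+1)`_l = 0) by case.
elim: j => [|j [[_ IH0] [IH1 IH2]]].
  have h1 : (U R 0)`_0 = 2 ^+ 0 by rewrite U0 coefC.
  have h2 : forall l, (0 < l)%N -> (U R 0)`_l = 0 by move=> [|l] // _; rewrite U0 coefC /=.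
  have h3 : (U R 1)`_1 = 2 ^+ 1 by rewrite U1 coefMn coefX expr1.
  have h4 : forall l, (1 < l)%N -> (U R 1)`_l = 0 by move=> [|[|l]] // _; rewrite U1 coefMn coefX /= mul0rn.
  by [].
split; first by split.
have E : forall l, (U R j.+2)`_l = (if l is l'.+1 then (U R j.+1)`_l' else 0) *+ 2 - (U R j)`_l.
  by move=> l; rewrite USS coefB mulrnAl coefMn coefXM; case: l.
split.
  by rewrite E IH1 IH0 // subr0 [in RHS]exprS mulr_natl.
move=> [|l] // lj; rewrite E IH2 // IH0 ?subr0 ?mul0rn //; lia.
Qed.

Lemma Ulead j : (U R j)`_j = 2 ^+ j. Proof. exact: (proj1 (Ucoef j)). Qed.
Lemma Uhi j l : (j < l)%N -> (U R j)`_l = 0. Proof. exact: (proj2 (Ucoef j)). Qed.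

Lemma Wr1 (F : 'I_1 -> R -> R) x : Wr F x = F ord0 x.
Proof.
rewrite /Wr (expand_det_col _ ord0) big_ord1 mxE derive1n0 /cofactor det_mx00.
by rewrite addn0 expr0 !mulr1.
Qed.

Lemma factR p : \prod_(j < p) (j.+1)%:R = p`!%:R :> R.
Proof.
elim: p => [|p IH]; first by rewrite big_ord0.
by rewrite big_ord_recr /= IH factS natrM mulrC.
Qed.

Lemma horner_sumc (P : {poly R}) K c : (forall l, (K <= l)%N -> P`_l = 0) ->
  P.[c] = \sum_(l < K) P`_l * c ^+ l.
Proof. by move=> h; apply: horner_coef_wide; apply/leq_sizeP. Qed.
End S.

End MG.
Import MG.

Lemma W_eq (R : realType) (m k' : nat) (x : R) :
  W k' m.+1 x = Wr (fun (j : 'I_m.+1) => if (j < m)%N then (fun t => sin (j.+1%:R * t))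
                        else (fun t => sin ((m.+1 + k')%:R * t))) x.
Proof.
case: m => [|m].
  by rewrite Wr1 /W /= add1n.
rewrite /W /=; congr Wr; apply/funext => j; apply/funext => t.
by case: ifP.
Qed.

Theorem lemma2 (R : realType) (n k : nat) (x : R) : (2 <= n)%N ->
  W (k + 2) n x =
  W k n x + (- 2 : R) ^+ n.-1 * (n + k + 1)%:R * (n - 2)`!%:R
            * sin x ^+ n * W (k + 2) n.-1 x.
Proof.
case: n => [|[|p]] // _.
set N := (p.+2 + k)%N.
pose F1 : 'I_p.+2 -> R -> R := fun j => if (j < p.+1)%N then (fun t => sin (j.+1%:R * t))
   else (fun t => sin t * (2 * cos (N.+1%:R * t))).
have stepB : W (k + 2) p.+2 x - W k p.+2 x = Wr F1 x.
  have eN : (p.+2 + (k + 2))%N = N.+2 by rewrite /N; lia.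
  have -> : W (k + 2) p.+2 x = Wr (fun (j : 'I_p.+2) t => if (j < p.+1)%N then sin (j.+1%:R * t) else sin (N.+2%:R * t)) x.
    by rewrite -eN.
  have -> : W k p.+2 x = Wr (fun (j : 'I_p.+2) t => if (j < p.+1)%N then sin (j.+1%:R * t) else sin (N%:R * t)) x.
    by [].
  symmetry; apply: (Wr_colB (j0 := ord_max)).
  - move=> j jm; apply/funext => t; rewrite /F1.
    have hj : (j < p.+1)%N.
      have := ltn_ord j; have : (j : nat) != p.+1.
        by apply/eqP => e; apply: (negP jm); apply/eqP; apply: val_inj.
      lia.
    by rewrite hj.
  - move=> j jm; apply/funext => t; rewrite /F1.
    have hj : (j < p.+1)%N.
      have := ltn_ord j; have : (j : nat) != p.+1.
        by apply/eqP => e; apply: (negP jm); apply/eqP; apply: val_inj.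
      lia.
    by rewrite hj.
  - by rewrite /= ltnn; apply: sm_sinn.
  - by rewrite /= ltnn; apply: sm_sinn.
  apply/funext => t; rewrite /F1 /= ltnn mulN1r.
  by rewrite sin_diff.
pose H : 'I_p.+2 -> R -> R := fun j => if (j < p.+1)%N then (fun t => (U R j).[cos t])
   else (fun t => 2 * cos (N.+1%:R * t)).
have smH : forall j, sm (H j).
  move=> j; rewrite /H; case: ifP => _; first exact: sm_hc.
  rewrite (_ : (fun t => 2 * cos (N.+1%:R * t)) = fun t => (U R N.+1 - Um1 R N).[cos t]).
    exact: sm_hc.
  by apply/funext => t; rewrite cosU.
have stepC : Wr F1 x = sin x ^+ p.+2 * Wr H x.
  rewrite -(Wr_mul x (@sm_sin R) smH); congr Wr; apply/funext => j; apply/funext => t.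
  by rewrite /F1 /H; case: ifP => _ //; rewrite sinU.
pose Pk (j : 'I_p.+1) : {poly R} := if (j < p)%N then (U R j.+1)^`() else (2 * N.+1%:R)%:P * U R N.
pose K : 'I_p.+1 -> R -> R := fun j t => (Pk j).[cos t].
have stepD : Wr H x = (- sin x) ^+ p.+1 * Wr K x.
  rewrite (@Wr_first R p.+1 H x); last first.
    by apply/funext => t; rewrite /H /= hornerC.
  have smg : sm (fun t : R => - sin t).
    rewrite (_ : (fun t : R => - sin t) = fun t => (-1) * sin t); first exact/sm_scal/sm_sin.
    by apply/funext => t; rewrite mulN1r.
  have smK : forall j, sm (K j) by move=> j; exact: sm_hc.
  rewrite -(Wr_mul x smg smK); congr Wr; apply/funext => j; apply/funext => t.
  rewrite /H lift0 ltnS /K /Pk; case: ifP => jp; first exact: d1_hc.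
  by rewrite d1cos sinU !hornerE; rng.
pose Pm (l : 'I_p.+1) : {poly R} := if (l < p)%N then 'X^l else U R N.
pose Mo : 'I_p.+1 -> R -> R := fun l t => (Pm l).[cos t].
pose P1 := \prod_(j < p) ((U R j.+1)^`())`_j.
have stepE : Wr K x = (P1 * (2 * N.+1%:R)) * Wr Mo x.
  pose T := \matrix_(l < p.+1, j < p.+1) (if (j < p)%N then (if (l < p)%N then ((U R j.+1)^`())`_l else 0)
                                         else (if (l < p)%N then 0 else 2 * N.+1%:R)).
  rewrite (@Wr_tri R p.+1 K Mo T x).
  - congr (_ * _); rewrite big_ord_recr /= mxE ltnn; congr (_ * _).
    by apply: eq_bigr => j _; rewrite mxE /= ltn_ord.
  - by move=> l; exact: sm_hc.
  - move=> j; apply/funext => t; rewrite /K /Pk big_ord_recr /= !mxE ltnn.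
    case: ifP => jp.
      rewrite mul0r addr0 (@horner_sumc R _ p); last first.
        move=> l pl; rewrite coef_deriv Uhi ?mul0rn //; lia.
      by apply: eq_bigr => l _; rewrite mxE jp /= ltn_ord /Mo /Pm /= ltn_ord hornerXn.
    rewrite big1 ?add0r; last by move=> l _; rewrite mxE jp /= ltn_ord mul0r.
    by rewrite /Mo /Pm /= ltnn !hornerE.
  - move=> l j jl; rewrite mxE; case: ifP => jp; case: ifP => lp //.
      by rewrite coef_deriv Uhi ?mul0rn.
    have := ltn_ord l; lia.
pose Pg (j : 'I_p.+1) : {poly R} := if (j < p)%N then U R j else U R N.
pose G : 'I_p.+1 -> R -> R := fun j t => (Pg j).[cos t].
have stepF : W (k + 2) p.+2.-1 x = sin x ^+ p.+1 * Wr G x.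
  have smG : forall j, sm (G j) by move=> j; exact: sm_hc.
  change (p.+2.-1) with p.+1; rewrite W_eq -(Wr_mul x (@sm_sin R) smG).
  congr Wr; apply/funext => j; apply/funext => t.
  rewrite /G /Pg; case: ifP => _; first by rewrite sinU.
  by rewrite -sinU; congr (sin (_ * t)); rewrite /N; congr (_%:R); lia.
pose P2 := \prod_(j < p) (U R j)`_j.
have stepH : Wr G x = P2 * Wr Mo x.
  pose T := \matrix_(l < p.+1, j < p.+1) (if (j < p)%N then (if (l < p)%N then (U R j)`_l else 0)
                                         else (if (l < p)%N then 0 else 1)).
  rewrite (@Wr_tri R p.+1 G Mo T x).
  - congr (_ * _); rewrite big_ord_recr /= mxE ltnn mulr1.
    by apply: eq_bigr => j _; rewrite mxE /= ltn_ord.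
  - by move=> l; exact: sm_hc.
  - move=> j; apply/funext => t; rewrite /G /Pg big_ord_recr /= !mxE ltnn.
    case: ifP => jp.
      rewrite mul0r addr0 (@horner_sumc R _ p); last first.
        move=> l pl; rewrite Uhi //; lia.
      by apply: eq_bigr => l _; rewrite mxE jp /= ltn_ord /Mo /Pm /= ltn_ord hornerXn.
    rewrite big1 ?add0r; last by move=> l _; rewrite mxE jp /= ltn_ord mul0r.
    by rewrite /Mo /Pm /= ltnn mul1r.
  - move=> l j jl; rewrite mxE; case: ifP => jp; case: ifP => lp //.
      by rewrite Uhi.
    have := ltn_ord l; lia.
have hP : P1 = 2 ^+ p * p`!%:R * P2.
  have e : forall j : 'I_p, ((U R j.+1)^`())`_j = 2 * ((j.+1)%:R * (U R j)`_j).
    by move=> j; rewrite coef_deriv !Ulead exprS -mulr_natr; rng.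
  rewrite /P1 /P2 -factR (eq_bigr _ (fun j _ => e j)) !big_split /= prodr_const card_ord.
  by rewrite mulrA.
rewrite stepF stepH.
have D := stepB; rewrite stepC stepD stepE hP in D.
rewrite -[W (k + 2) p.+2 x](subrK (W k p.+2 x)) D.
rewrite (_ : (p.+2 - 2)%N = p); last by lia.
rewrite (_ : (p.+2 + k + 1)%N = N.+1); last by rewrite addn1.
change (p.+2.-1) with p.+1.
rewrite [(- sin x) ^+ _]exprNn [(- 2) ^+ _]exprNn [(2 : R) ^+ p.+1]exprS.
move: (sin x ^+ p.+2) ((-1) ^+ p.+1 : R) (sin x ^+ p.+1) (2 ^+ p : R) => a b c d.
rng.
Qed.
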